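(* Assume (A1), (A2), (A3). For all $x,\tilde x,v,\tilde v\in\mathbb R^d$, \[r(x,\tilde x,v,\tilde v)^2\le2\,\frac{(1+\alpha)^2+\alpha^2}{\min(\frac13\lambda,3)}\big(H(x,v)+H(\tilde x,\tilde v)\big),\] so that in particular, if $r(x,\tilde x,v,\tilde v)\ge R_1$ then $\gamma H(x,v)+\gamma H(\tilde x,\tilde v)\ge\frac{12}5B$.
   Context: $U,W\in\mathcal C^1(\mathbb R^d)$. (A1): $U\ge0$ and there exist $\lambda>0$, $A\ge0$ with $\tfrac12\nabla U(x)\cdot x\ge\lambda(U(x)+|x|^2/4)-A$ for all $x$. (A2): $\nabla U$ is $L_U$-Lipschitz, $L_U>0$. (A3): $W$ even, $\nabla W$ is $L_W$-Lipschitz, $L_W<\lambda/8$. Fix $\tilde A\ge0$ with $U(x)\ge\frac\lambda6|x|^2-\tilde A$ for all $x$. Set $\gamma=\frac{\lambda}{2(\lambda+1)}$, $B=24(A+(\lambda-\gamma)\tilde A+d)$, $H(x,v)=24U(x)+(6(1-\gamma)+\lambda)|x|^2+12x\cdot v+12|v|^2$, $\alpha=L_U+\frac\lambda4$, $R_1=\sqrt{\frac{24((1+\alpha)^2+\alpha^2)}{5\gamma\min(3,\lambda/3)}B}$, and $r(x,\tilde x,v,\tilde v)=\alpha|x-\tilde x|+|x-\tilde x+v-\tilde v|$. *)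

(* Defs.v *)
From HB Require Import structures.
From mathcomp Require Import all_boot all_order all_algebra.
From mathcomp Require Import all_classical all_reals all_analysis.
Set Implicit Arguments. Unset Strict Implicit. Unset Printing Implicit Defensive.
Import Order.TTheory GRing.Theory Num.Theory.
Import numFieldNormedType.Exports.
Local Open Scope ring_scope.

Section Defs.
Variables (R : realType) (d : nat).

Definition dotp (x y : 'rV[R]_d) : R := \sum_(i < d) x ord0 i * y ord0 i.
Definition enorm (x : 'rV[R]_d) : R := Num.sqrt (dotp x x).

Definition is_gradient (f : 'rV[R]_d -> R) (g : 'rV[R]_d -> 'rV[R]_d) : Prop :=
  forall x, differentiable f x /\ forall h, 'd f x h = dotp (g x) h.

Definition C1_with_gradient (f : 'rV[R]_d -> R) (g : 'rV[R]_d -> 'rV[R]_d) : Prop :=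
  is_gradient f g /\ continuous g.

Definition lipschitz_with (L : R) (g : 'rV[R]_d -> 'rV[R]_d) : Prop :=
  forall x y, enorm (g x - g y) <= L * enorm (x - y).

Definition gamma_c (lam : R) : R := lam / (2 * (lam + 1)).
Definition B_c (lam A At : R) : R :=
  24 * (A + (lam - gamma_c lam) * At + d%:R).
Definition H_fn (lam : R) (U : 'rV[R]_d -> R) (x v : 'rV[R]_d) : R :=
  24 * U x + (6 * (1 - gamma_c lam) + lam) * dotp x x + 12 * dotp x v
  + 12 * dotp v v.
Definition alpha_c (lam LU : R) : R := LU + lam / 4.
Definition R1_c (lam LU A At : R) : R :=
  Num.sqrt (24 * ((1 + alpha_c lam LU) ^+ 2 + alpha_c lam LU ^+ 2)
            / (5 * gamma_c lam * Num.min 3 (lam / 3)) * B_c lam A At).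
Definition r_fn (lam LU : R) (x xt v vt : 'rV[R]_d) : R :=
  alpha_c lam LU * enorm (x - xt) + enorm (x - xt + v - vt).

End Defs.

(* Main.v *)
Require Import Defs.
From HB Require Import structures.
From mathcomp Require Import all_boot all_order all_algebra.
From mathcomp Require Import all_classical all_reals all_analysis.
From mathcomp Require Import ring lra.
Import Order.TTheory GRing.Theory Num.Theory.
Import numFieldNormedType.Exports.
Local Open Scope ring_scope.

Lemma scal (R : realFieldType) (lam k m a b : R) : 0 < lam -> 3 + lam <= k ->
  m = Num.min (lam/3) 3 ->
  m * (a*a + (a+b)*(a+b)) <= k*(a*a) + 12*(a*b) + 12*(b*b).
Proof.
move=> hl hk hm.
have [hm1 hm2 hm3] : [/\ 0 < m, m <= 3 & 36 <= (3 + lam - m) * (12 - m)].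
  case: (leP (lam/3) 3) => h; [rewrite hm (min_l h) | rewrite hm (min_r (ltW h))].
    split; [lra|lra|]. nra.
  split; [lra|lra|lra].
set y := a + b.
have hb : b = y - a by rewrite /y; ring.
rewrite hb.
have h1 : 0 <= ((12 - m) * y - 6 * a)^+2 by apply: sqr_ge0.
have h2 : 0 <= ((3+lam-m)*(12-m) - 36) * (a*a) by apply: mulr_ge0; [lra| nra].
have h3 : 0 <= (k - 3 - lam) * (a*a) by apply: mulr_ge0; [lra| nra].
have h4 : 0 <= (12 - m) * ((3+lam - m)*(a*a) - 12*a*y + (12-m)*(y*y)) by nra.
have h5 : 0 <= (3+lam - m)*(a*a) - 12*a*y + (12-m)*(y*y).
  by rewrite -(pmulr_rge0 _ (_ : 0 < 12 - m)) //; lra.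
nra.
Qed.

Section V.
Variables (R : realType) (d : nat).

Lemma dotp_ge0 (x : 'rV[R]_d) : 0 <= dotp x x.
Proof. by apply: sumr_ge0 => i _; rewrite -expr2 sqr_ge0. Qed.

Lemma enorm_sq (x : 'rV[R]_d) : enorm x ^+ 2 = dotp x x.
Proof. by rewrite /enorm sqr_sqrtr // dotp_ge0. Qed.

Lemma enorm_ge0 (x : 'rV[R]_d) : 0 <= enorm x.
Proof. exact: sqrtr_ge0. Qed.

Lemma dsub (p q : 'rV[R]_d) : dotp (p - q) (p - q) <= 2 * (dotp p p + dotp q q).
Proof.
rewrite /dotp -big_split mulr_sumr /=; apply: ler_sum => i _; rewrite !mxE.
have := sqr_ge0 (p ord0 i + q ord0 i); rewrite expr2; nra.
Qed.

Lemma gam_le (lam : R) : 0 < lam -> 0 < gamma_c lam /\ gamma_c lam <= 1/2.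
Proof.
move=> hl; rewrite /gamma_c; split; first by apply: divr_gt0; lra.
rewrite ler_pdivrMr; last lra.
lra.
Qed.

Lemma Hlow (lam : R) (U : 'rV[R]_d -> R) : 0 < lam -> (forall x, 0 <= U x) ->
  forall x v, Num.min (lam/3) 3 * (dotp x x + dotp (x+v) (x+v)) <= H_fn lam U x v.
Proof.
move=> hl hU x v; have [_ hg] := gam_le lam hl.
have := hU x; rewrite /H_fn.
set k := 6 * (1 - gamma_c lam) + lam.
have hk : 3 + lam <= k by rewrite /k; lra.
suff : Num.min (lam/3) 3 * (dotp x x + dotp (x+v) (x+v)) <=
   k * dotp x x + 12 * dotp x v + 12 * dotp v v by lra.
rewrite /dotp mulrDr !mulr_sumr -!big_split /=; apply: ler_sum => i _; rewrite !mxE.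
rewrite -mulrDr.
exact: scal hl hk erefl.
Qed.
End V.
Arguments gam_le {R} lam.
Arguments Hlow {R d lam U}.
Arguments dotp_ge0 {R d}.
Arguments enorm_ge0 {R d}.
Arguments dsub {R d}.
Arguments enorm_sq {R d}.

Theorem lemma2p3 (R : realType) (d : nat)
  (U W : 'rV[R]_d -> R) (gradU gradW : 'rV[R]_d -> 'rV[R]_d)
  (lam A LU LW At : R)
  (hU : C1_with_gradient U gradU) (hW : C1_with_gradient W gradW)
  (* (A1) *)
  (hUnn : forall x, 0 <= U x) (hlam : 0 < lam) (hA : 0 <= A)
  (hA1 : forall x, dotp (gradU x) x / 2 >= lam * (U x + dotp x x / 4) - A)
  (* (A2) *)
  (hLU : 0 < LU) (hUlip : lipschitz_with LU gradU)
  (* (A3) *)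
  (hWeven : forall x, W (- x) = W x)
  (hLW0 : 0 <= LW) (hWlip : lipschitz_with LW gradW) (hLW : LW < lam / 8)
  (* the fixed constant A~ *)
  (hAt : 0 <= At) (hUAt : forall x, U x >= lam / 6 * dotp x x - At) :
  forall x xt v vt : 'rV[R]_d,
    r_fn lam LU x xt v vt ^+ 2
      <= 2 * (((1 + alpha_c lam LU) ^+ 2 + alpha_c lam LU ^+ 2)
              / Num.min (lam / 3) 3)
         * (H_fn lam U x v + H_fn lam U xt vt)
    /\ (r_fn lam LU x xt v vt >= R1_c d lam LU A At ->
        gamma_c lam * H_fn lam U x v + gamma_c lam * H_fn lam U xt vt
          >= 12 / 5 * B_c d lam A At).
Proof.
move=> x xt v vt.
have [hg0 hg] := gam_le lam hlam.
set m := Num.min (lam/3) 3.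
have hm0 : 0 < m by rewrite /m lt_min; apply/andP; split; lra.
set al := alpha_c lam LU.
have hal : 0 < al by rewrite /al /alpha_c; lra.
set K := (1 + al) ^+ 2 + al ^+ 2.
have hK : 1 + al ^+ 2 <= K by rewrite /K; nra.
have hK0 : 0 < K by have := sqr_ge0 al; lra.
set y := x + v. set yt := xt + vt.
have ey : x - xt + v - vt = y - yt by rewrite /y /yt opprD addrA (addrAC x v (- xt)).
have hr : r_fn lam LU x xt v vt = al * enorm (x - xt) + enorm (y - yt) by rewrite /r_fn ey.
set a := enorm (x - xt). set b := enorm (y - yt).
have ha2 : a ^+ 2 <= 2 * (dotp x x + dotp xt xt) by rewrite /a enorm_sq dsub.
have hb2 : b ^+ 2 <= 2 * (dotp y y + dotp yt yt) by rewrite /b enorm_sq dsub.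
have hH1 := Hlow hlam hUnn x v. have hH2 := Hlow hlam hUnn xt vt.
rewrite -/m -/y in hH1. rewrite -/m -/yt in hH2.
have p1 := dotp_ge0 x. have p2 := dotp_ge0 xt. have p3 := dotp_ge0 y. have p4 := dotp_ge0 yt.
set P := dotp x x + dotp xt xt + dotp y y + dotp yt yt.
set S := H_fn lam U x v + H_fn lam U xt vt.
have hP0 : 0 <= P by rewrite /P; lra.
have hSP : m * P <= S by rewrite /S /P; lra.
have hr2 : (al * a + b) ^+ 2 <= 2 * K * P.
  have e1 : (al * a + b) ^+ 2 <= (1 + al ^+ 2) * (a ^+ 2 + b ^+ 2).
    have := sqr_ge0 (a - al * b); rewrite !expr2; nra.
  have e2 : (1 + al ^+ 2) * (a ^+ 2 + b ^+ 2) <= (1 + al ^+ 2) * (2 * P).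
    apply: ler_wpM2l; first by rewrite addr_ge0 // sqr_ge0.
    rewrite /P; lra.
  have e3 : (1 + al ^+ 2) * (2 * P) <= K * (2 * P) by apply: ler_wpM2r => //; lra.
  lra.
have hmain : r_fn lam LU x xt v vt ^+ 2 <= 2 * (K / m) * S.
  rewrite hr; apply: (le_trans hr2).
  have -> : 2 * K * P = 2 * (K / m) * (m * P) by field; lra.
  apply: ler_wpM2l => //; apply: mulr_ge0 => //; apply: divr_ge0; lra.
split => // hR.
have hB : 0 <= B_c d lam A At.
  rewrite /B_c; apply: mulr_ge0 => //; apply: addr_ge0; last exact: ler0n.
  apply: addr_ge0 => //; apply: mulr_ge0 => //.
  have eg : gamma_c lam * (2 * (lam + 1)) = lam by rewrite /gamma_c divfK //; apply/eqP; lra.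
  nra.
have hm' : Num.min 3 (lam / 3) = m by rewrite /m minC.
move: hR; rewrite /R1_c -/al -/K hm' => hR.
set X := 24 * K / (5 * gamma_c lam * m) * B_c d lam A At.
have hX : 0 <= X.
  rewrite /X; apply: mulr_ge0 => //; apply: divr_ge0; [|apply: mulr_ge0]; try lra.
have hr0 : 0 <= r_fn lam LU x xt v vt.
  by rewrite hr; apply: addr_ge0; [apply: mulr_ge0; [lra|apply: enorm_ge0]|apply: enorm_ge0].
have hXr : X <= r_fn lam LU x xt v vt ^+ 2.
  rewrite -(sqr_sqrtr hX) !expr2; have hs := sqrtr_ge0 X; exact: ler_pM.
have h1 : X <= 2 * (K / m) * S by apply: (le_trans hXr hmain).
have eX : X = (24 / (5 * gamma_c lam) * B_c d lam A At) * (K / m).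
  rewrite /X; field; apply/andP; split; apply/eqP; lra.
have h2 : 24 / (5 * gamma_c lam) * B_c d lam A At <= 2 * S.
  have hKm : 0 < K / m by apply: divr_gt0 => //; nra.
  rewrite -(ler_pM2r hKm) -eX; lra.
have e3 : 12 / 5 * B_c d lam A At = gamma_c lam * (24 / (5 * gamma_c lam) * B_c d lam A At) / 2.
  field; lra.
have h4 := ler_wpM2l (ltW hg0) h2.
have -> : gamma_c lam * H_fn lam U x v + gamma_c lam * H_fn lam U xt vt = gamma_c lam * (2 * S) / 2.
  by rewrite /S; move: (H_fn lam U x v) (H_fn lam U xt vt) (gamma_c lam) => p q g; field.
rewrite e3; apply: ler_wpM2r h4; rewrite invr_ge0; lra.
Qed.
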